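(* Let $(B,\lfloor\cdot,\cdot\rfloor)$ be an SSD space with quadratic form $q$, and let $f:B\to\mathbb{R}\cup\{+\infty\}$ be a minimal element (with respect to the pointwise order) of the set of convex functions $g:B\to\mathbb{R}\cup\{+\infty\}$ satisfying $g\ge q$ on $B$. Then $f^{@}\ge f$ on $B$.
   Context: An SSD space is a pair $(B,\lfloor\cdot,\cdot\rfloor)$ with $B$ a nonzero real vector space and $\lfloor\cdot,\cdot\rfloor$ a symmetric bilinear form; $q(b)=\frac12\lfloor b,b\rfloor$. For $f:B\to\mathbb{R}\cup\{+\infty\}$, $f^{@}(b)=\sup_{c\in B}\{\lfloor c,b\rfloor-f(c)\}$. *)

(* Defs.v *)
From HB Require Import structures.
From mathcomp Require Import all_boot all_order all_algebra.
From mathcomp Require Import all_classical all_reals ereal.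
Set Implicit Arguments. Unset Strict Implicit. Unset Printing Implicit Defensive.
Import Order.TTheory GRing.Theory Num.Theory.
Local Open Scope ring_scope.

Definition sym_bilinear (R : realType) (B : lmodType R) (bf : B -> B -> R) : Prop :=
  (forall a b : B, bf a b = bf b a) /\
  (forall a b c : B, bf (a + b)%R c = (bf a c + bf b c)%R) /\
  (forall (r : R) (a b : B), bf (r *: a)%R b = (r * bf a b)%R).

Definition SSD_space (R : realType) (B : lmodType R) (bf : B -> B -> R) : Prop :=
  (exists b : B, b != 0) /\ sym_bilinear bf.

Definition qform (R : realType) (B : lmodType R) (bf : B -> B -> R) (b : B) : R :=
  (bf b b / 2)%R.

(* g : B -> R ∪ {+oo} (never -oo) *)
Definition no_minfty (R : realType) (B : lmodType R) (g : B -> \bar R) : Prop :=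
  forall b, g b != -oo%E.

Definition econvex (R : realType) (B : lmodType R) (g : B -> \bar R) : Prop :=
  forall (x y : B) (t : R), (0 < t)%R -> (t < 1)%R ->
    (g (t *: x + (1 - t) *: y)%R <= t%:E * g x + (1 - t)%R%:E * g y)%E.

Definition convex_above_q (R : realType) (B : lmodType R) (bf : B -> B -> R)
  (g : B -> \bar R) : Prop :=
  no_minfty g /\ econvex g /\ (forall b, ((qform bf b)%:E <= g b)%E).

Definition minimal_convex_above_q (R : realType) (B : lmodType R) (bf : B -> B -> R)
  (f : B -> \bar R) : Prop :=
  convex_above_q bf f /\
  (forall g, convex_above_q bf g -> (forall b, (g b <= f b)%E) -> g = f).

Definition fat (R : realType) (B : lmodType R) (bf : B -> B -> R)
  (f : B -> \bar R) (b : B) : \bar R :=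
  ereal_sup [set ((bf c b)%:E - f c)%E | c in [set: B]].

(* Main.v *)
Require Import Defs.
From mathcomp Require Import all_boot all_order all_algebra.
From mathcomp Require Import all_classical all_reals ereal.
From mathcomp Require Import ring lra.
Import Order.TTheory GRing.Theory Num.Theory.
Local Open Scope ring_scope.

Lemma bf_expand (R : realType) (B : lmodType R) (bf : B -> B -> R) :
  sym_bilinear bf -> forall (l m : R) (d b : B),
  bf (l *: d + m *: b) (l *: d + m *: b) =
  l * l * bf d d + 2 * l * m * bf d b + m * m * bf b b.
Proof.
move=> [sym [add sc]] l m d b.
have lin : forall z, bf (l *: d + m *: b) z = l * bf d z + m * bf b z.
  by move=> z; rewrite add !sc.
rewrite lin sym lin (sym b (l *: d + m *: b)) lin (sym b d).
ring.
Qed.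

Local Open Scope ereal_scope.

Definition hullS {R : realType} {B : lmodType R} (f : B -> \bar R) (b : B) (al : R)
  (c : B) : set (\bar R) :=
  [set v | exists (l : R) (d : B) (r : R),
     [/\ (0 <= l)%R, (l <= 1)%R, c = (l *: d + (1 - l) *: b)%R,
         (l = 0%R \/ f d <= r%:E) & v = (l * r + (1 - l) * al)%:E]].

Definition hullg {R : realType} {B : lmodType R} (f : B -> \bar R) (b : B) (al : R)
  (c : B) : \bar R := ereal_inf (hullS f b al c).

Lemma hull_ge_q (R : realType) (B : lmodType R) (bf : B -> B -> R)
  (f : B -> \bar R) (b : B) (al : R) :
  sym_bilinear bf -> (forall c, (qform bf c)%:E <= f c) ->
  (qform bf b <= al)%R -> (forall d, (bf d b)%:E - f d <= al%:E) ->
  forall c v, hullS f b al c v -> (qform bf c)%:E <= v.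
Proof.
move=> hs hq hb hfat c v [l [d [r [l0 l1 -> hd ->]]]].
rewrite lee_fin /qform bf_expand //.
case: hd => [->|hd].
  rewrite /qform in hb. lra.
have hqd : (bf d d / 2 <= r)%R.
  by rewrite -lee_fin (le_trans (hq d)).
have hdb : (bf d b - r <= al)%R.
  have := hfat d; case E: (f d) hd => [r0| |] //=; rewrite ?lee_fin => hd.
  - move=> h; lra.
rewrite /qform in hb.
have h1 : (0 <= l * l * (r - bf d d / 2))%R.
  by apply: mulr_ge0; [apply: mulr_ge0 | lra].
have h2 : (0 <= l * (1 - l) * (r + al - bf d b))%R.
  by apply: mulr_ge0; [apply: mulr_ge0; lra | lra].
have h3 : (0 <= (1 - l) * (1 - l) * (al - bf b b / 2))%R.
  by apply: mulr_ge0; [apply: mulr_ge0; lra | lra].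
nra.
Qed.

Lemma vec3 (R : realType) (B : lmodType R) (a a' c c' e1 e2 e' : R) (u w b : B) :
  a = a' -> c = c' -> (e1 + e2 = e')%R ->
  (a *: u + e1 *: b + (c *: w + e2 *: b) = a' *: u + c' *: w + e' *: b)%R.
Proof. by move=> <- <- <-; rewrite scalerDl addrACA. Qed.

Lemma hull_comb (R : realType) (B : lmodType R) (f : B -> \bar R) (b : B) (al : R) :
  econvex f -> forall (x y : B) (t w1 w2 : R), (0 < t)%R -> (t < 1)%R ->
  hullS f b al x w1%:E -> hullS f b al y w2%:E ->
  hullS f b al (t *: x + (1 - t) *: y)%R (t * w1 + (1 - t) * w2)%:E.
Proof.
move=> hc x y t w1 w2 t0 t1 [l1 [d1 [r1 [l10 l11 -> h1 [->]]]]]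
  [l2 [d2 [r2 [l20 l21 -> h2 [->]]]]].
have ex : forall (u1 u2 : R) (v1 v2 : B),
   (t *: (l1 *: v1 + (1 - l1) *: b) + (1 - t) *: (l2 *: v2 + (1 - l2) *: b) =
    (t * l1) *: v1 + ((1 - t) * l2) *: v2 + (1 - (t * l1 + (1 - t) * l2)) *: b)%R.
  move=> _ _ v1 v2.
  rewrite !scalerDr !scalerA; apply: vec3 => //; ring.
have [el1|nl1] := eqVneq l1 0%R.
  have [el2|nl2] := eqVneq l2 0%R.
    exists 0%R, b, 0%R; split => //.
    - rewrite (ex 0 0 d1 d2)%R el1 el2 !mulr0 !scale0r !add0r subr0 scale1r.
      by rewrite ?scale0r ?add0r ?scale1r.
    - by left.
    - by rewrite el1 el2; congr (_%:E); ring.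
  case: h2 => [/eqP|h2]; first by rewrite (negbTE nl2).
  exists ((1 - t) * l2)%R, d2, r2; split.
  - apply: mulr_ge0 => //; lra.
  - have : (0 <= (1 - t) * (1 - l2))%R by apply: mulr_ge0; lra.
    move=> h; nra.
  - by rewrite (ex 0 0 d1 d2)%R el1 mulr0 scale0r add0r add0r.
  - by right.
  - by rewrite el1; congr (_%:E); ring.
case: h1 => [/eqP|h1]; first by rewrite (negbTE nl1).
have [el2|nl2] := eqVneq l2 0%R.
  exists (t * l1)%R, d1, r1; split.
  - apply: mulr_ge0 => //; lra.
  - have : (0 <= t * (1 - l1))%R by apply: mulr_ge0; lra.
    move=> h; nra.
  - by rewrite (ex 0 0 d1 d2)%R el2 mulr0 scale0r addr0 addr0.
  - by right.
  - by rewrite el2; congr (_%:E); ring.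
case: h2 => [/eqP|h2]; first by rewrite (negbTE nl2).
have l1p : (0 < l1)%R by rewrite lt_def nl1 l10.
have l2p : (0 < l2)%R by rewrite lt_def nl2 l20.
have p1 : (0 < t * l1)%R by apply: mulr_gt0.
have p2 : (0 < (1 - t) * l2)%R by apply: mulr_gt0; lra.
set mu := (t * l1 + (1 - t) * l2)%R.
have mup : (0 < mu)%R by rewrite /mu; lra.
set s := (t * l1 / mu)%R.
have ms1 : (mu * s = t * l1)%R by rewrite /s mulrCA mulfV ?mulr1 // gt_eqF.
have ms2 : (mu * (1 - s) = (1 - t) * l2)%R by rewrite mulrBr mulr1 ms1 /mu; ring.
have s0 : (0 < s)%R by rewrite /s divr_gt0.
have s1 : (s < 1)%R.
  have : (0 < mu * (1 - s))%R by rewrite ms2.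
  rewrite pmulr_rgt0 //; lra.
exists mu, (s *: d1 + (1 - s) *: d2)%R, (s * r1 + (1 - s) * r2)%R; split.
- lra.
- have : (l1 * t <= t)%R by rewrite ler_piMl //; lra.
  have : (l2 * (1 - t) <= 1 - t)%R by rewrite ler_piMl //; lra.
  rewrite /mu; nra.
- rewrite (ex 0 0 d1 d2)%R scalerDr !scalerA ms1 ms2 //.
- right; apply: (le_trans (hc _ _ _ s0 s1)).
  have -> : ((s * r1 + (1 - s) * r2)%:E = s%:E * r1%:E + (1 - s)%:E * r2%:E) by rewrite EFinD !EFinM.
  apply: leeD.
  + by rewrite lee_pmul2l // lte_fin.
  + by rewrite lee_pmul2l // lte_fin; lra.
- congr (_%:E); symmetry.
  have e : (mu * (s * r1 + (1 - s) * r2) = t * l1 * r1 + (1 - t) * l2 * r2)%R.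
    by rewrite mulrDr (mulrA mu s) (mulrA mu (1 - s)%R) ms1 ms2.
  rewrite e /mu; ring.
Qed.

Lemma hullS_fin (R : realType) (B : lmodType R) (f : B -> \bar R) (b : B) (al : R) c v :
  hullS f b al c v -> exists w : R, v = w%:E.
Proof. by move=> [l [d [r [_ _ _ _ ->]]]]; eexists. Qed.

Lemma mul_poo (R : realType) (t : R) : (0 < t)%R -> t%:E * +oo = +oo.
Proof. by move=> t0; rewrite muleC gt0_mulye // lte_fin. Qed.

Theorem mainTheorem13 (R : realType) (B : lmodType R) (bf : B -> B -> R)
  (f : B -> \bar R) :
  SSD_space bf -> minimal_convex_above_q bf f ->
  forall b : B, (f b <= fat bf f b)%E.
Proof.
move=> [_ hs] [[hnm [hcv hq]] hmin] b.
rewrite leNgt; apply/negP => hlt.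
have hfat : forall d, (bf d b)%:E - f d <= fat bf f b.
  by move=> d; apply: ereal_sup_ubound; exists d.
have qlt : (qform bf b)%:E < f b.
  rewrite lt_neqAle hq andbT; apply/negP => /eqP E.
  have := hfat b; rewrite -E -EFinD => h.
  have h2 := hlt; rewrite -E in h2.
  have := le_lt_trans h h2; rewrite lte_fin /qform; lra.
have [al [h1 h2 h3]] : exists al : R,
    [/\ fat bf f b <= al%:E, (qform bf b <= al)%R & al%:E < f b].
  case E: (fat bf f b) hlt => [r| |] hlt.
  - have [hrq|hrq] := leP r (qform bf b).
      by exists (qform bf b); split => //; rewrite lee_fin.
    by exists r; split => //; apply: ltW.
  - by rewrite ltNge leey in hlt.
  - by exists (qform bf b); split => //; rewrite leNye.
have hfat' : forall d, (bf d b)%:E - f d <= al%:E.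
  by move=> d; apply: le_trans (hfat d) h1.
set g := hullg f b al.
have hqg : forall c, (qform bf c)%:E <= g c.
  move=> c; apply/ereal_infP => v hv.
  exact: (@hull_ge_q _ _ _ _ _ _ hs hq h2 hfat' c v hv).
have gnm : forall c, g c != -oo.
  move=> c; apply/negP => /eqP E; have := hqg c; by rewrite E leeNy_eq.
have gconv : econvex g.
  move=> x y t t0 t1.
  have t1p : (0 < 1 - t)%R by lra.
  case Ex: (g x) => [a| |]; last by have := gnm x; rewrite Ex.
  - case Ey: (g y) => [a'| |]; last by have := gnm y; rewrite Ey.
    + apply/lee_addgt0Pr => e e0.
      have [v1 hv1 lt1] : exists2 v, hullS f b al x v & v < (a + e)%:E.
        by apply: ereal_inf_lt; rewrite /g /hullg in Ex; rewrite Ex lte_fin; lra.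
      have [v2 hv2 lt2] : exists2 v, hullS f b al y v & v < (a' + e)%:E.
        by apply: ereal_inf_lt; rewrite /g /hullg in Ey; rewrite Ey lte_fin; lra.
      have [w1 ew1] := @hullS_fin _ _ _ _ _ _ _ hv1; have [w2 ew2] := @hullS_fin _ _ _ _ _ _ _ hv2.
      rewrite ew1 lte_fin in lt1; rewrite ew2 lte_fin in lt2.
      rewrite ew1 in hv1; rewrite ew2 in hv2.
      apply: le_trans; first exact: (ereal_inf_lbound (@hull_comb _ _ _ _ _ hcv _ _ _ _ _ t0 t1 hv1 hv2)).
      rewrite -!EFinM -!EFinD lee_fin.
      have : (t * w1 <= t * (a + e))%R by rewrite ler_pM2l //; lra.
      have : ((1 - t) * w2 <= (1 - t) * (a' + e))%R by rewrite ler_pM2l //; lra.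
      nra.
    + by rewrite mul_poo // addey ?leey.
  - rewrite mul_poo // addye ?leey //.
    case: (g y) (gnm y) => [r| |] //= _.
    by rewrite mul_poo.
have gle : forall c, g c <= f c.
  move=> c; case E: (f c) => [r| |]; last by have := hnm c; rewrite E.
  - apply: ereal_inf_lbound; exists 1%R, c, r; split => //.
    + by rewrite subrr scale0r addr0 scale1r.
    + by right; rewrite E.
    + by congr (_%:E); ring.
  - exact: leey.
have := hmin g (conj gnm (conj gconv hqg)) gle => gf.
have : g b <= al%:E.
  apply: ereal_inf_lbound; exists 0%R, b, 0%R; split => //.
  + by rewrite scale0r add0r subr0 scale1r.
  + by left.
  + by congr (_%:E); ring.
rewrite gf => hb.
by have := lt_le_trans h3 hb; rewrite ltxx.
Qed.
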